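(* Let $\Gamma=(V,E,\ell)$ be a connected finite labeled simplicial graph with all labels even whose Artin group is of FC-type, $\mathbb{K}$ a field of characteristic $0$, and $\chi:A_\Gamma\to\mathbb{Z}$ a surjective non-resonant homomorphism. Then for every $d\in\mathbb{T}_\Gamma$ and every edge $e\in E$, $\operatorname{mult}_d(\mathbf{p}_e\mathbf{q}_e)\le 2$.
   Context: $\Gamma$ has labels $\ell(e)=2\tilde\ell(e)$, $\tilde\ell(e)\ge1$; $A_\Gamma=\langle g_v\ (v\in V)\mid (g_vg_w)^{\tilde\ell(e)}=(g_wg_v)^{\tilde\ell(e)},\ e=\{v,w\}\in E\rangle$; FC-type means that for every clique $X$ the Coxeter group on $g_v$ ($v\in X$) with $g_v^2=1$, $(g_vg_w)^{\ell(\{v,w\})}=1$ is finite. $m_v=\chi(g_v)$, $m_e=m_v+m_w$ for $e=\{v,w\}$; non-resonant means $m_v\ne0$ for all $v$. For $e=\{v,w\}\in E$: $\mathbf{p}_e=(t^{m_v}-1)(t^{m_w}-1)$ and $\mathbf{q}_e=q_{\tilde\ell(e)}(t^{m_e})$ with $q_n(x)=(x^n-1)/(x-1)$. For $f\in\mathbb{K}[t^{\pm1}]$, $\operatorname{mult}_d(f)$ is the largest $m$ with $\Phi_d(t)^m\mid f$, $\Phi_d$ the $d$-th cyclotomic polynomial. $\mathbb{T}_\Gamma=\{d\in\mathbb{Z}_{>1}: d\mid m_v\text{ for some }v\}\cup\{d\in\mathbb{Z}_{>1}: d\mid\tilde\ell(e)m_e,\ d\nmid m_e\text{ for some }e\in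 E\}$. *)

(* Defs.v *)
From HB Require Import structures.
From mathcomp Require Import all_boot all_order all_algebra all_field.
Set Implicit Arguments. Unset Strict Implicit. Unset Printing Implicit Defensive.
Import Order.TTheory GRing.Theory Num.Theory.
Local Open Scope ring_scope.

(* ---------- Graph data ----------
   V : finType (vertices), E : rel V (edges), lt : V -> V -> nat gives
   \tilde\ell; the label of edge {v,w} is \ell = 2 * lt v w. *)

Definition simple_graph (V : finType) (E : rel V) :=
  symmetric E /\ irreflexive E.

Definition connected_graph (V : finType) (E : rel V) :=
  forall v w : V, connect E v w.

Definition even_labels (V : finType) (E : rel V) (lt : V -> V -> nat) :=
  (forall v w, lt v w = lt w v) /\ (forall v w, E v w -> (1 <= lt v w)%N).

Definition clique (V : finType) (E : rel V) (X : {set V}) :=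
  forall v w, v \in X -> w \in X -> v != w -> E v w.

Definition alt_word (V : Type) (v w : V) (n : nat) : seq V :=
  flatten (nseq n [:: v; w]).

Inductive cox_rel (V : finType) (lt : V -> V -> nat) (X : {set V}) :
  seq V -> seq V -> Prop :=
| cox_sq v : v \in X -> cox_rel lt X [:: v; v] [::]
| cox_braid v w : v \in X -> w \in X -> v != w ->
    cox_rel lt X (alt_word v w (2 * lt v w)) [::].

Inductive cox_eq (V : finType) (lt : V -> V -> nat) (X : {set V}) :
  seq V -> seq V -> Prop :=
| cox_refl u : cox_eq lt X u u
| cox_sym u w : cox_eq lt X u w -> cox_eq lt X w u
| cox_trans u w x : cox_eq lt X u w -> cox_eq lt X w x -> cox_eq lt X u x
| cox_ctx s t x y : all (mem X) s -> all (mem X) t -> cox_rel lt X x y ->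
    cox_eq lt X (s ++ x ++ t) (s ++ y ++ t).

(* The Coxeter group W_X (generated by the g_v, v in X) is finite:
   finitely many classes of words over X. *)
Definition coxeter_finite (V : finType) (lt : V -> V -> nat) (X : {set V}) :=
  exists L : seq (seq V),
    forall u : seq V, all (mem X) u -> exists2 u', u' \in L & cox_eq lt X u u'.

Definition FC_type (V : finType) (E : rel V) (lt : V -> V -> nat) :=
  forall X : {set V}, clique E X -> coxeter_finite lt X.

(* ---------- The Artin group A_Gamma and homomorphisms to Z ----------
   Elements are represented by words in the generators and their inverses:
   (v, false) = g_v, (v, true) = g_v^{-1}. *)

Definition aword (V : Type) := seq (V * bool).

Definition ainv (V : Type) (a : V * bool) : V * bool := (a.1, ~~ a.2).

Definition apow (V : Type) (v w : V) (n : nat) : aword V :=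
  flatten (nseq n [:: (v, false); (w, false)]).

Inductive artin_rel (V : finType) (E : rel V) (lt : V -> V -> nat) :
  aword V -> aword V -> Prop :=
| ar_free a : artin_rel E lt [:: a; ainv a] [::]
| ar_braid v w : E v w -> artin_rel E lt (apow v w (lt v w)) (apow w v (lt v w)).

Inductive artin_eq (V : finType) (E : rel V) (lt : V -> V -> nat) :
  aword V -> aword V -> Prop :=
| ae_refl u : artin_eq E lt u u
| ae_sym u w : artin_eq E lt u w -> artin_eq E lt w u
| ae_trans u w x : artin_eq E lt u w -> artin_eq E lt w x -> artin_eq E lt u x
| ae_ctx s t x y : artin_rel E lt x y ->
    artin_eq E lt (s ++ x ++ t) (s ++ y ++ t).

Definition artin_hom (V : finType) (E : rel V) (lt : V -> V -> nat)
  (chi : aword V -> int) :=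
  (forall u w, chi (u ++ w) = chi u + chi w) /\
  (forall u w, artin_eq E lt u w -> chi u = chi w).

Definition hom_surjective (V : Type) (chi : aword V -> int) :=
  forall z : int, exists u, chi u = z.

Definition mv (V : Type) (chi : aword V -> int) (v : V) : int := chi [:: (v, false)].

Definition non_resonant (V : Type) (chi : aword V -> int) :=
  forall v, mv chi v != 0.

Definition me (V : Type) (chi : aword V -> int) (v w : V) : int :=
  mv chi v + mv chi w.

Definition in_TGamma (V : finType) (E : rel V) (lt : V -> V -> nat)
  (chi : aword V -> int) (d : nat) : Prop :=
  (1 < d)%N /\
  ((exists v, (d%:Z %| mv chi v)%Z) \/
   (exists v w, E v w /\ ((d%:Z %| (lt v w)%:Z * me chi v w)%Z) /\
                ~~ (d%:Z %| me chi v w)%Z)).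

(* ---------- Laurent polynomials K[t^{+-1}] ----------
   realized inside the fraction field of K[t]: elements p * t^z. *)
Section Laurent.
Variable K : fieldType.

Definition LK := {fraction {poly K}}.
Definition tofracK (p : {poly K}) : LK := @FracField.tofrac _ p.

Definition tL : LK := tofracK 'X.

Definition is_laurent (f : LK) := exists (p : {poly K}) (z : int), f = tofracK p * tL ^ z.

Definition ldvd (g f : LK) := exists h : LK, is_laurent h /\ f = g * h.

Definition PhiL (d : nat) : LK := tofracK (map_poly intr ('Phi_d)).

(* q_n(x) = (x^n - 1)/(x - 1) = 1 + x + ... + x^(n-1) *)
Definition qn (n : nat) (x : LK) : LK := \sum_(i < n) x ^+ i.

Definition p_e (V : Type) (chi : aword V -> int) (v w : V) : LK :=
  (tL ^ mv chi v - 1) * (tL ^ mv chi w - 1).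

Definition q_e (V : Type) (lt : V -> V -> nat) (chi : aword V -> int) (v w : V) : LK :=
  qn (lt v w) (tL ^ me chi v w).

Definition mult_le (d : nat) (f : LK) (k : nat) :=
  forall m : nat, ldvd (PhiL d ^+ m) f -> (m <= k)%N.
End Laurent.

(* Main.v *)
Require Import Defs.
From HB Require Import structures.
From mathcomp Require Import all_boot all_order all_algebra all_field.
From mathcomp Require Import zify ring.
Import Order.TTheory GRing.Theory Num.Theory.
Local Open Scope ring_scope.
Definition Gp (k n : nat) : {poly int} := \sum_(i < n) ('X^k) ^+ i.

Section RatK.
Variable K : fieldType.
Hypothesis HK : [pchar K] =i pred0.

Lemma nz_denK x : (denq x)%:~R != 0 :> K.
Proof.
have := denq_gt0 x; case: (denq x) => // n; rewrite ltz_nat => n0.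
by move/pcharf0P: HK => ->; rewrite -lt0n.
Qed.

Fact ratK_zmod : zmod_morphism (@ratr K).
Proof.
have injZtoQ: @injective rat int intr by apply: intr_inj.
have nz_den := nz_denK.
move=> x y.
apply: (canLR (mulfK (nz_den _))); apply: (mulIf (nz_den x)).
rewrite mulrAC mulrBl divfK ?nz_den // mulrAC -!rmorphM.
apply: (mulIf (nz_den y)); rewrite mulrAC mulrBl divfK ?nz_den //.
rewrite -!(rmorphM, rmorphB); congr _%:~R; apply: injZtoQ.
rewrite !(rmorphM, rmorphB) /= [_ - _]lock /= -lock !numqE.
by rewrite (mulrAC y) -!mulrBl -mulrA mulrAC !mulrA.
Qed.

Fact ratK_monoid : monoid_morphism (@ratr K).
Proof.
have injZtoQ: @injective rat int intr by apply: intr_inj.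
have nz_den := nz_denK.
split=> [|x y]; first by rewrite /ratr divr1.
rewrite /ratr mulrC mulrAC; apply: canLR (mulKf (nz_den _)) _; rewrite !mulrA.
do 2!apply: canRL (mulfK (nz_den _)) _; rewrite -!rmorphM; congr _%:~R.
apply: injZtoQ; rewrite !rmorphM [x * y]lock /= !numqE -lock.
by rewrite -!mulrA mulrA mulrCA -!mulrA (mulrCA y).
Qed.

Lemma transferK (p q : {poly int}) :
  map_poly (intr : int -> K) p %| map_poly (intr : int -> K) q ->
  map_poly (intr : int -> algC) p %| map_poly (intr : int -> algC) q.
Proof.
pose f : {rmorphism rat -> K} := HB.pack (@ratr K)
  (GRing.isZmodMorphism.Build _ _ _ ratK_zmod)
  (GRing.isMonoidMorphism.Build _ _ _ ratK_monoid).
have E r : map_poly (intr : int -> K) r = map_poly f (map_poly (intr : int -> rat) r).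
  by rewrite -map_poly_comp; apply: eq_map_poly => z /=; rewrite ratr_int.
have E' r : map_poly (intr : int -> algC) r = map_poly (ratr : rat -> algC) (map_poly (intr : int -> rat) r).
  by rewrite -map_poly_comp; apply: eq_map_poly => z /=; rewrite ratr_int.
by rewrite !E !E' !dvdp_map.
Qed.
End RatK.

Section AlgC.
Variables (d : nat) (z : algC).
Hypothesis pz : d.-primitive_root z.

Lemma z_neq0 : z != 0.
Proof.
apply/eqP=> z0; have := prim_expr_order pz; rewrite z0 expr0n.
by rewrite eqn0Ngt (prim_order_gt0 pz) /= => /eqP; rewrite eq_sym oner_eq0.
Qed.

Lemma Xn1_neq0 e : (0 < e)%N -> ('X^e - 1 : {poly algC}) != 0.
Proof. by move=> e0; rewrite -size_poly_eq0 size_XnsubC. Qed.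

Lemma mup_Xn1_le1 e : (0 < e)%N -> (mup z ('X^e - 1) <= 1)%N.
Proof.
move=> e0; rewrite mup_leq ?Xn1_neq0 //.
by rewrite separable_nosquare // ?size_XsubC // separable_Xn_sub_1 // pnatr_eq0 -lt0n.
Qed.

Lemma root_Xn1 e : root ('X^e - 1 : {poly algC}) z = (d %| e)%N.
Proof. by rewrite /root !hornerE subr_eq0 (prim_order_dvd pz). Qed.

Lemma mup_Xn1_0 e : ~~ (d %| e)%N -> mup z ('X^e - 1) = 0%N.
Proof. by move=> nd; rewrite mupNroot // root_Xn1. Qed.

Lemma mup_Xn1_1 e : (0 < e)%N -> (d %| e)%N -> mup z ('X^e - 1) = 1%N.
Proof.
move=> e0 de; apply/eqP; rewrite eqn_leq mup_Xn1_le1 //=.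
by rewrite -XsubC_dvd ?Xn1_neq0 // -root_factor_theorem root_Xn1.
Qed.

Lemma mup_Xj j : mup z ('X^j) = 0%N.
Proof. by rewrite mupNroot // /root hornerXn expf_eq0 negb_and z_neq0 orbT. Qed.

Lemma mup_sign (s : nat) : mup z ((-1) ^+ s) = 0%N.
Proof. by rewrite mupNroot // /root horner_exp hornerN hornerC expf_eq0 oppr_eq0 oner_eq0 andbF. Qed.

Let GC k n : {poly algC} := \sum_(i < n) ('X^k) ^+ i.

Lemma GC_mul k n : ('X^k - 1) * GC k n = 'X^(k * n) - 1.
Proof. by rewrite /GC -subrX1 exprM. Qed.

Lemma GC_neq0 k n : (0 < n)%N -> GC k n != 0.
Proof.
move=> n0; case: k => [|k].
  rewrite /GC; under eq_bigr do rewrite expr0 expr1n.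
  by rewrite sumr_const card_ord -polyC_natr polyC_eq0 pnatr_eq0 -lt0n.
apply/eqP=> h; have := GC_mul k.+1 n; rewrite h mulr0 => /esym/eqP.
by apply/negP; apply: Xn1_neq0; rewrite muln_gt0 n0.
Qed.

Lemma mup_GC k n : (0 < n)%N -> (mup z (GC k n) <= 1)%N /\ (d %| k -> mup z (GC k n) = 0)%N.
Proof.
move=> n0; case: k => [|k].
  rewrite /GC; under eq_bigr do rewrite expr0 expr1n.
  rewrite sumr_const card_ord -polyC_natr mupNroot //; last first.
    by rewrite rootC pnatr_eq0 -lt0n.
have := congr1 (mup z) (GC_mul k.+1 n).
rewrite mupM ?Xn1_neq0 ?GC_neq0 // => E.
have := mup_Xn1_le1 (k.+1 * n); rewrite muln_gt0 n0 => /(_ isT) H; split.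
  by rewrite -E in H; lia.
by move=> dk; rewrite -E mup_Xn1_1 // in H; lia.
Qed.
End AlgC.

Lemma algC_bound d m j (s : nat) (a b : int) n : (0 < d)%N ->
  a != 0 -> b != 0 -> (0 < n)%N ->
  map_poly (intr : int -> algC) ('Phi_d ^+ m) %|
  map_poly (intr : int -> algC) ((-1)^+s * ('X^`|a| - 1) * ('X^`|b| - 1) * Gp `|a+b| n * 'X^j) ->
  (m <= 2)%N.
Proof.
move=> d0 a0 b0 n0.
have [z pz] := C_prim_root_exists d0.
have mX : map_poly (intr : int -> algC) 'X = 'X by apply: map_polyX.
rewrite !(rmorphM, rmorphB, rmorphXn, rmorphN, rmorph1, rmorph_sum) /=.
under eq_bigr do rewrite !rmorphXn /= mX.
rewrite mX.
rewrite (Cintr_Cyclotomic pz).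
have hz : 'X - z%:P %| cyclotomic z d by rewrite -root_factor_theorem root_cyclotomic.
move/(dvdp_trans (dvdp_exp2r m hz)).
have ha : (0 < `|a|)%N by rewrite absz_gt0.
have hb : (0 < `|b|)%N by rewrite absz_gt0.
have sn0 : ((-1) ^+ s : {poly algC}) != 0 by rewrite expf_neq0 // oppr_eq0 oner_eq0.
have G0 := GC_neq0 `|a + b| n n0.
rewrite -mup_geq ?mulf_neq0 ?Xn1_neq0 ?expf_neq0 ?polyX_eq0 ?oppr_eq0 ?oner_eq0 //.
rewrite !mupM ?mulf_neq0 ?Xn1_neq0 ?expf_neq0 ?polyX_eq0 ?oppr_eq0 ?oner_eq0 //.
rewrite (mup_sign z) (mup_Xj d z pz).
have [G1 G2] := mup_GC d z pz `|a + b| n n0.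
have A1 := mup_Xn1_le1 z _ ha.
have B1 := mup_Xn1_le1 z _ hb.
have hab : (d %| absz a)%N -> (d %| absz b)%N -> (d %| absz (a + b)%R)%N.
  move=> h1 h2; have e x : (d%:Z %| x)%Z = (d %| absz x)%N by rewrite dvdzE.
  have : (d%:Z %| a + b)%Z by apply: rpredD; rewrite e.
  by rewrite e.
case: (boolP (d %| absz a)%N) => da; last first.
  rewrite (mup_Xn1_0 d z pz _ da) => H; apply: (leq_trans H).
  by rewrite !add0n addn0; exact: leq_add B1 G1.
case: (boolP (d %| absz b)%N) => db; last first.
  rewrite (mup_Xn1_0 d z pz _ db) => H; apply: (leq_trans H).
  by rewrite add0n !addn0; exact: leq_add A1 G1.
rewrite G2 ?hab // => H; apply: (leq_trans H).
by rewrite add0n !addn0; exact: leq_add A1 B1.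
Qed.

Section Gen.
Variable F : fieldType.

Lemma G1 (y : F) : y != 0 -> y^-1 - 1 = (y - 1) * - y^-1.
Proof. by move=> y0; rewrite mulrN mulrBl divff // mul1r opprB. Qed.

Lemma G2 n (x : F) : x != 0 ->
  \sum_(i < n) x^-1 ^+ i = (\sum_(i < n) x ^+ i) * x^-1 ^+ n.-1.
Proof.
move=> x0; case: n => [|n]; first by rewrite !big_ord0 mul0r.
elim: n => [|n IH]; first by rewrite !big_ord_recr !big_ord0 /= !expr0 mulr1.
rewrite big_ord_recl expr0.
under eq_bigr do rewrite exprSr.
rewrite -mulr_suml IH big_ord_recr /= [in RHS]big_ord_recr /=.
have xn0 : x ^+ n != 0 by rewrite expf_neq0.
rewrite big_ord_recr /= !exprS !exprVn.
move: (\sum_(i < n) x ^+ i) xn0 => Q; move: (x ^+ n) => y y0.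
by field; rewrite y0 x0.
Qed.

Lemma G3 (A B P sg t : F) p q p' q' : t != 0 ->
  A * (sg * t ^+ p / t ^+ q) = B * (P * (t ^+ p' / t ^+ q')) ->
  A * sg * t ^+ (p + q') = B * P * t ^+ (p' + q).
Proof.
move=> t0 H.
have E : A * sg * t ^+ (p + q') = (A * (sg * t ^+ p / t ^+ q)) * (t ^+ q * t ^+ q').
  rewrite exprD; have tq : t ^+ q != 0 by rewrite expf_neq0.
  move: tq; move: (t ^+ q) (t ^+ p) (t ^+ q') => a b c a0; by field; rewrite ?a0.
rewrite E H exprD; have tq : t ^+ q' != 0 by rewrite expf_neq0.
move: tq; move: (t ^+ q') (t ^+ p') (t ^+ q) => a b c a0; by field; rewrite ?a0.
Qed.
End Gen.

Section Laurent2.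
Variable K : fieldType.
Local Notation T := (tL K).
Local Notation tf := (@tofracK K).
Local Notation iota := (map_poly (intr : int -> K)).

Definition LU (u : LK K) := exists (s p q : nat), u = (-1) ^+ s * T ^+ p / T ^+ q.

Lemma T_neq0 : T != 0.
Proof. by rewrite /tL /tofracK tofrac_eq0 polyX_eq0. Qed.

Lemma tfM p q : tf (p * q) = tf p * tf q.
Proof. exact: rmorphM. Qed.

Lemma tfXn n : tf 'X^n = T ^+ n.
Proof. by rewrite /tL /tofracK rmorphXn. Qed.

Lemma iota_Xn1 e : iota ('X^e - 1) = 'X^e - 1.
Proof. by rewrite rmorphB rmorph1 rmorphXn /= map_polyX. Qed.

Lemma tfXn1 e : tf ('X^e - 1) = T ^+ e - 1.
Proof. by rewrite /tofracK /tL rmorphB rmorph1 rmorphXn. Qed.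

Lemma LU_mul u1 u2 : LU u1 -> LU u2 -> LU (u1 * u2).
Proof.
move=> [s1 [p1 [q1 ->]]] [s2 [p2 [q2 ->]]]; exists (s1 + s2)%N, (p1 + p2)%N, (q1 + q2)%N.
by rewrite !exprD invfM; ring.
Qed.

Lemma L1 (a : int) : exists2 u, LU u & T ^ a - 1 = tf (iota ('X^`|a| - 1)) * u.
Proof.
rewrite iota_Xn1 tfXn1.
case: a => k.
  exists 1; first by exists 0%N, 0%N, 0%N; rewrite !expr0 divr1 mulr1.
  by rewrite mulr1.
exists (- (T ^+ k.+1)^-1); first by exists 1%N, 0%N, k.+1; rewrite expr1 expr0 mulr1 mulN1r.
rewrite NegzE /= -exprnN.
have y0 : T ^+ k.+1 != 0 by rewrite expf_neq0 // T_neq0.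
exact: G1.
Qed.


Lemma qnS_l n (x : LK K) : qn n.+1 x = 1 + x * qn n x.
Proof.
rewrite /qn big_ord_recl expr0; congr (_ + _); rewrite mulr_sumr.
by apply: eq_bigr => i _; rewrite exprS.
Qed.

Lemma qnS_r n (x : LK K) : qn n.+1 x = qn n x + x ^+ n.
Proof. by rewrite /qn big_ord_recr. Qed.

Lemma qn_inv n (x : LK K) : x != 0 -> qn n x^-1 = qn n x * x^-1 ^+ n.-1.
Proof. by move=> x0; rewrite /qn; apply: G2. Qed.

Lemma iotaX : iota 'X = 'X.
Proof. by apply: map_polyX. Qed.

Lemma iotaG k n : iota (Gp k n) = \sum_(i < n) ('X^k) ^+ i.
Proof.
rewrite /Gp rmorph_sum; apply: eq_bigr => i _ /=.
by rewrite !rmorphXn /= iotaX.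
Qed.

Lemma tfG k n : tf (iota (Gp k n)) = qn n (T ^+ k).
Proof.
rewrite iotaG /qn /tofracK /tL rmorph_sum; apply: eq_bigr => i _.
by rewrite !rmorphXn.
Qed.

Lemma L2 (c : int) n : exists2 u, LU u & qn n (T ^ c) = tf (iota (Gp `|c| n)) * u.
Proof.
rewrite tfG; case: c => k.
  exists 1; first by exists 0%N, 0%N, 0%N; rewrite !expr0 divr1 mulr1.
  by rewrite mulr1.
exists ((T ^+ k.+1)^-1 ^+ n.-1).
  by exists 0%N, 0%N, (k.+1 * n.-1)%N; rewrite expr0 !mul1r exprM exprVn.
rewrite NegzE -exprnN qn_inv //; apply: expf_neq0; apply: T_neq0.
Qed.


Lemma Tz (z : int) : exists p' q', T ^ z = T ^+ p' / T ^+ q'.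
Proof.
case: z => k; first by exists k, 0%N; rewrite expr0 divr1.
by exists 0%N, k.+1; rewrite NegzE -exprnN expr0 div1r.
Qed.


Lemma tf_sign s : tf ((-1) ^+ s) = (-1) ^+ s.
Proof. by rewrite /tofracK rmorphXn rmorphN rmorph1. Qed.

Lemma key (F : {poly int}) u m (d : nat) : LU u ->
  ldvd (PhiL K d ^+ m) (tf (iota F) * u) ->
  exists s j, iota ('Phi_d ^+ m) %| iota (F * (-1) ^+ s * 'X^j).
Proof.
move=> [s [p [q ->]]] [h [[P [z ->]] H]].
have [p' [q' Ez]] := Tz z.
exists s, (p + q')%N.
have -> : iota (F * (-1) ^+ s * 'X^(p + q')) = iota ('Phi_d ^+ m) * (P * 'X^(p' + q)).
  apply/eqP; rewrite -(tofrac_eq (R := {poly K})); apply/eqP.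
  have e1 : iota (F * (-1) ^+ s * 'X^(p + q')) = iota F * (-1) ^+ s * 'X^(p + q').
    by rewrite !rmorphM !rmorphXn rmorphN rmorph1 /= iotaX.
  have e2 : iota ('Phi_d ^+ m) = iota ('Phi_d) ^+ m by rewrite rmorphXn.
  rewrite e1 e2 -!/(tofracK _) !tfM tf_sign tfXn.
  have e3 : tf (iota 'Phi_d ^+ m) = PhiL K d ^+ m by rewrite /PhiL /tofracK rmorphXn.
  rewrite e3 mulrA.
  rewrite Ez in H.
  rewrite tfXn; apply: G3 => //; apply: T_neq0.
by rewrite dvdp_mulr.
Qed.

End Laurent2.

Lemma G4 (R : comRingType) (x1 x2 x3 u1 u2 u3 : R) :
  (x1 * u1) * (x2 * u2) * (x3 * u3) = (x1 * x2 * x3) * (u1 * u2 * u3).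
Proof. by ring. Qed.

Theorem lemma5p3 (V : finType) (E : rel V) (lt : V -> V -> nat)
  (K : fieldType) (chi : aword V -> int) :
  simple_graph E -> connected_graph E -> even_labels E lt -> FC_type E lt ->
  [pchar K] =i pred0 ->
  artin_hom E lt chi -> hom_surjective chi -> non_resonant chi ->
  forall d : nat, in_TGamma E lt chi d ->
  forall v w : V, E v w ->
  mult_le d (p_e K chi v w * q_e K lt chi v w) 2.
Proof.
move=> _ _ [_ hlt] _ HK _ _ nr d [d1 _] v w Evw m hdiv.
have [u1 U1 E1] := L1 K (mv chi v).
have [u2 U2 E2] := L1 K (mv chi w).
have [u3 U3 E3] := L2 K (mv chi v + mv chi w) (lt v w).
move: hdiv; rewrite /p_e /q_e /me E1 E2 E3 G4 -!tfM -!rmorphM.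
move=> /(@key K _ _ _ _ (@LU_mul K _ _ (@LU_mul K _ _ U1 U2) U3)) [s [j hd]].
have := @transferK K HK _ _ hd.
set A := ('X^_ - 1); set B := ('X^_ - 1); set G := Gp _ _.
have -> : A * B * G * (-1) ^+ s * 'X^j = (-1) ^+ s * A * B * G * 'X^j by ring.
apply: algC_bound; first by lia.
- exact: nr.
- exact: nr.
- exact: hlt.
Qed.
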